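(* For every $n\ge 1$ and every $w \in S_n$, $\operatorname{dep}(w) = \operatorname{ar}(\phi(w))$.
   Context: For $w\in S_n$, the depth is $\operatorname{dep}(w)=\sum_{i:\,w(i)>i}(w(i)-i)$, i.e. half the total displacement $\sum_{i=1}^n |w(i)-i|$. A Motzkin path of length $n$ is a word $p_1\cdots p_n$ in the letters $U,D,H$ such that the subword formed by the letters $U$ and $D$ is a balanced parenthesization; it is drawn as a lattice path from $(0,0)$ to $(n,0)$ with $U$ a step $(1,1)$, $D$ a step $(1,-1)$, $H$ a step $(1,0)$, never going below height $0$. Its area $\operatorname{ar}(p)$ is the area of the region between the line $y=0$ and the path. The map $\phi\colon S_n\to\{\text{Motzkin paths of length } n\}$ is defined by $\phi(w)=p_1\cdots p_n$ where $p_i=U$ if $w^{-1}(i)>i<w(i)$, $p_i=D$ if $w^{-1}(i)<i>w(i)$, and $p_i=H$ otherwise. *)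

(* Defs.v *)
From mathcomp Require Import all_boot all_order all_fingroup all_algebra.
Set Implicit Arguments. Unset Strict Implicit. Unset Printing Implicit Defensive.
Import Order.TTheory GRing.Theory Num.Theory.

(* Positions 1..n of the paper are the ordinals 0..n-1 of 'I_n; depth and
   the comparisons defining phi are invariant under this shift. *)

Definition dep (n : nat) (w : 'S_n) : nat :=
  (\sum_(i < n | (i < w i)%N) (w i - i))%N.

Inductive step := U | D | H.

Definition step_eqb (a b : step) : bool :=
  match a, b with U, U | D, D | H, H => true | _, _ => false end.

Definition stepval (s : step) : int :=
  match s with U => 1 | D => -1 | H => 0 end.

Definition height (p : seq step) (k : nat) : int :=
  \sum_(j < k) stepval (nth H p j).

Definition motzkin (p : seq step) : Prop :=
  (forall k : nat, (k <= size p)%N -> (0 <= height p k)%R) /\ height p (size p) = 0%R.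

(* area between y = 0 and the lattice path: each step (1,h_{j}) -> (1,h_{j+1})
   contributes the trapezoid area (h_j + h_{j+1})/2 *)
Definition area (p : seq step) : rat :=
  \sum_(j < size p) (((height p j + height p j.+1)%:~R) / 2%:R)%R.

Definition phi_step (n : nat) (w : 'S_n) (i : 'I_n) : step :=
  if ((i < (w^-1)%g i)%N && (i < w i)%N) then U
  else if (((w^-1)%g i < i)%N && (w i < i)%N) then D
  else H.

Definition phi (n : nat) (w : 'S_n) : seq step :=
  [seq phi_step w i | i <- enum 'I_n].

(* Main.v *)
Require Import Defs.
From mathcomp Require Import all_boot all_order all_fingroup all_algebra zify.
Import Order.TTheory GRing.Theory Num.Theory.
Set Implicit Arguments. Unset Strict Implicit. Unset Printing Implicit Defensive.

Definition cc n (w : 'S_n) (k : nat) : nat :=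
  (\sum_(i < n) ((i < k) && (k <= w i) : nat))%N.

Lemma cc_rec n (w : 'S_n) (k : 'I_n) :
  (cc w k.+1 + ((w^-1)%g k < k) = cc w k + (k < w k))%N.
Proof.
have E1 : (((w^-1)%g k < k) : nat) = (\sum_(i<n) ((w i == k :> nat) && (i < k)))%N.
  rewrite (bigD1 ((w^-1)%g k)) //= permKV eqxx /= big1 ?addn0 // => i Hi.
  case: eqP => // /val_inj Hwi; move: Hi; by rewrite -Hwi permK eqxx.
have E2 : ((k < w k) : nat) = (\sum_(i<n) ((i == k :> nat) && (k < w i)))%N.
  rewrite (bigD1 k) //= eqxx /= big1 ?addn0 // => i Hi.
  case: eqP => // /val_inj Hik; by rewrite Hik eqxx in Hi.
rewrite E1 E2 /cc -!big_split /=; apply: eq_bigr => i _.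
rewrite ltnS.
move: (nat_of_ord (w i)) (nat_of_ord i) (nat_of_ord k) => a b c.
by case: (ltngtP b c); case: (ltngtP a c).
Qed.

Lemma stepval_phi n (w : 'S_n) (k : 'I_n) :
  stepval (phi_step w k) = (Posz ((k < w k)%N : nat) - Posz ((((w^-1)%g k < k)%N : nat)))%R.
Proof.
have E : ((w^-1)%g k == k :> nat) = (w k == k :> nat).
  apply/eqP/eqP => /val_inj H0; [by rewrite -{1}H0 permKV | by rewrite -{1}H0 permK].
rewrite /phi_step; move: E.
move: (nat_of_ord (w k)) (nat_of_ord ((w^-1)%g k)) (nat_of_ord k) => a b c.
by case: (ltngtP a c); case: (ltngtP b c).
Qed.

Lemma height_cc n (w : 'S_n) k : (k <= n)%N -> height (phi w) k = Posz (cc w k).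
Proof.
elim: k => [|k IH] Hk.
  by rewrite /height big_ord0 /cc big1.
rewrite /height big_ord_recr /= -/(height (phi w) k) IH ?(ltnW Hk) //.
have -> : nth H (phi w) k = phi_step w (Ordinal Hk).
  by rewrite (nth_map (Ordinal Hk)) ?size_enum_ord // (nth_ord_enum _ (Ordinal Hk)).
rewrite stepval_phi.
have := cc_rec w (Ordinal Hk) => /= /(congr1 Posz); rewrite !PoszD.
move: (Posz (cc w k.+1)) (Posz (cc w k)) (Posz (nat_of_bool (k < w _))) (Posz (nat_of_bool (_ < k))) => x y a b; lia.
Qed.

Lemma cnt a b m : (\sum_(k < m) ((a <= k) && (k < b) : nat))%N = (minn b m - a)%N.
Proof.
elim: m => [|m IH]; first by rewrite big_ord0; lia.
rewrite big_ord_recr /= IH; case: leqP; case: ltnP => /=; lia.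
Qed.

Lemma dep_cc n (w : 'S_n) : dep w = (\sum_(k < n) cc w k.+1)%N.
Proof.
rewrite /dep big_mkcond /=.
rewrite (eq_bigr (fun i : 'I_n => \sum_(k < n) ((i < k.+1) && (k.+1 <= w i) : nat))%N).
  by rewrite exchange_big.
move=> i _.
rewrite (eq_bigr (fun k : 'I_n => ((i <= k) && (k < w i) : nat))); last by move=> k _; rewrite ltnS.
rewrite cnt (minn_idPl (ltnW (ltn_ord (w i)))); case: ltnP => // h; apply/esym/eqP; by rewrite subn_eq0.
Qed.

Lemma shift n (w : 'S_n) : (\sum_(j < n) cc w j)%N = (\sum_(j < n) cc w j.+1)%N.
Proof.
move: w; case: n => [|m] w; first by rewrite !big_ord0.
rewrite big_ord_recl big_ord_recr /=.
have -> : cc w 0 = 0%N by rewrite /cc big1.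
have -> : cc w m.+1 = 0%N by rewrite /cc big1 // => i _; by rewrite (leqNgt m.+1) !ltn_ord.
by rewrite add0n addn0.
Qed.

Theorem proposition3p2 (n : nat) (w : 'S_n) :
  (0 < n)%N -> ((dep w)%:R : rat) = area (phi w).
Proof.
move=> _.
rewrite /area size_map size_enum_ord.
rewrite (eq_bigr (fun j : 'I_n => ((cc w j + cc w j.+1)%:R / 2%:R) : rat)%R); last first.
  move=> j _; rewrite !height_cc ?(ltnW (ltn_ord j)) ?ltn_ord // -PoszD.
rewrite -GRing.mulr_suml -GRing.natr_sum big_split /= shift dep_cc.
by rewrite addnn -muln2 GRing.natrM GRing.mulfK.
Qed.
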